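(* Let $n\ge3$ be odd. Every self-dual code $C$ in $\mathbb{F}_2^{n+1}$ has a basis $\{\mathbf{y}_1,\ldots,\mathbf{y}_{(n+1)/2}\}$ with $\mathbf{y}_1+\cdots+\mathbf{y}_{(n+1)/2}=\mathbf{j}_{n+1}$.
   Context: A linear code $C\subseteq\mathbb{F}_2^{N}$ is self-dual if $C=C^\perp$ with respect to the standard dot product. $\mathbf{j}_{n+1}$ is the all-ones vector in $\mathbb{F}_2^{n+1}$. *)

(* Defs.v *)
From HB Require Import structures.
From mathcomp Require Import all_boot all_order all_algebra.
Set Implicit Arguments. Unset Strict Implicit. Unset Printing Implicit Defensive.
Import GRing.Theory.
Local Open Scope ring_scope.

Definition dotp (N : nat) (x y : 'rV['F_2]_N) : 'F_2 := \sum_(i < N) x 0 i * y 0 i.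

Definition dual_code (N : nat) (C : {vspace 'rV['F_2]_N}) : pred 'rV['F_2]_N :=
  fun x => [forall y : 'rV['F_2]_N, (y \in C) ==> (dotp x y == 0)].

Definition self_dual (N : nat) (C : {vspace 'rV['F_2]_N}) : Prop :=
  forall x : 'rV['F_2]_N, (x \in C) = dual_code C x.

Definition all_ones (N : nat) : 'rV['F_2]_N := const_mx 1.

(* Main.v *)
Require Import Defs.
From mathcomp Require Import all_boot all_order all_algebra.
Import GRing.Theory.
Local Open Scope ring_scope.
Lemma F2aa (a : 'F_2) : a + a = 0.
Proof. by case: a => [[|[|m]]] // ?; apply/val_inj. Qed.
Lemma F2mm (a : 'F_2) : a * a = a.
Proof. by case: a => [[|[|m]]] // ?; apply/val_inj. Qed.
Lemma dimr N : \dim (fullv : {vspace 'rV['F_2]_N}) = N.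
Proof. by rewrite dimvf /dim /= mul1n. Qed.

Lemma dotpE N (x y : 'rV['F_2]_N) : dotp x y = (y *m x^T) 0 0.
Proof. by rewrite /dotp mxE; apply: eq_bigr => i _; rewrite mxE mulrC. Qed.

Lemma dotp_sum N I (r : seq I) (P : pred I) (F : I -> 'rV['F_2]_N) (c : I -> 'F_2) x :
  dotp x (\sum_(i <- r | P i) c i *: F i) = \sum_(i <- r | P i) c i * dotp x (F i).
Proof.
rewrite dotpE mulmx_suml summxE; apply: eq_bigr => i _.
by rewrite -scalemxAl mxE dotpE.
Qed.

Lemma self_dual_dim N (C : {vspace 'rV['F_2]_N}) : self_dual C -> (\dim C + \dim C)%N = N.
Proof.
move=> HC.
set s := vbasis C.
pose B : 'M['F_2]_(\dim C, N) := \matrix_(i, j) s`_i 0 j.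
have rowB i : row i B = s`_i by apply/rowP => j; rewrite !mxE.
have rfB : row_free B.
  rewrite -kermx_eq0; apply/eqP/row_matrixP => i; rewrite row0.
  set u := row i (kermx B).
  have : u *m B = 0 by apply/sub_kermxP; exact: row_sub.
  rewrite mulmx_sum_row.
  under eq_bigr => l _ do rewrite rowB.
  have /freeP Hf := basis_free (vbasisP C).
  move/(Hf (fun l => u 0 l)) => H.
  by apply/rowP => l; rewrite H mxE.
have rfT : row_full B^T by rewrite /row_full mxrank_tr; exact: rfB.
pose g : 'Hom('rV['F_2]_N, 'rV['F_2]_(\dim C)) := linfun (mulmxr B^T).
have gE x : g x = x *m B^T by rewrite lfunE.
have img : limg g = fullv.
  apply/vspaceP => v; rewrite memvf.
  have /submxP [D ->] : (v <= B^T)%MS by exact: submx_full.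
  by rewrite -gE memv_img ?memvf.
have ker : lker g = C.
  apply/vspaceP => x; rewrite memv_ker gE HC /dual_code /=.
  have gi i : (x *m B^T) 0 i = dotp x s`_i.
    by rewrite /dotp mxE; apply: eq_bigr => j _; rewrite !mxE.
  apply/eqP/forallP => [H y|H].
    apply/implyP => yC; rewrite (coord_vbasis yC) dotp_sum big1 // => i _.
    by rewrite -/s -gi H mxE mulr0.
  apply/rowP => i; rewrite gi mxE.
  apply/eqP; move: (H s`_i) => /implyP; apply; apply: vbasis_mem.
  by rewrite mem_nth // size_tuple.
have := limg_ker_dim g fullv.
by rewrite capfv ker img !dimr.
Qed.

Lemma vaa N (v : 'rV['F_2]_N) : v + v = 0.
Proof. by apply/rowP => i; rewrite !mxE F2aa. Qed.

Lemma ones_in N (C : {vspace 'rV['F_2]_N}) : self_dual C -> all_ones N \in C.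
Proof.
move=> HC; rewrite HC; apply/forallP => y; apply/implyP => yC.
have := yC; rewrite HC => /forallP /(_ y) /implyP /(_ yC).
rewrite /dotp; congr (_ == _); apply: eq_bigr => i _.
by rewrite !mxE mul1r F2mm.
Qed.

Theorem lemma8p9 (n : nat) (Hn : (3 <= n)%N) (Hodd : odd n)
  (C : {vspace 'rV['F_2]_(n.+1)}) (HC : self_dual C) :
  exists y : ((n.+1)./2).-tuple 'rV['F_2]_(n.+1),
    basis_of C y /\ \sum_(i < (n.+1)./2) y`_i = all_ones (n.+1).
Proof.
set j := all_ones n.+1.
have jC : j \in C by exact: ones_in.
have j0 : j != 0.
  apply/eqP => /rowP /(_ ord0); rewrite !mxE => /eqP; by [].
have hdim := @self_dual_dim _ _ HC.
have hk : (n.+1)./2 = \dim C.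
  move: hdim; move: (\dim C) => d <-; by rewrite addnn half_double.
set D := (C :\: <[j]>)%VS.
have hjC : (<[j]> <= C)%VS by rewrite -memvE.
have hCD : (D + <[j]> = C)%VS.
  by rewrite -[in RHS](addv_diff_cap C <[j]>) (capv_idPr hjC).
have hdC : \dim C = (\dim D).+1.
  by rewrite -hCD dimv_disjoint_sum ?capv_diff // dim_vline j0 addn1.
set e := vbasis D.
set a := j + \sum_(i < \dim D) e`_i.
set ys := a :: (e : seq _).
have Hs : size ys == (n.+1)./2 by rewrite hk /= size_tuple hdC.
exists (Tuple Hs); split.
  rewrite basisEdim /= size_tuple -hdC leqnn andbT.
  have eS : (D <= <<ys>>)%VS.
    by rewrite /ys span_cons (span_basis (vbasisP D)) addvSr.
  rewrite -hCD subv_add eS /= -memvE.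
  have -> : j = a - \sum_(i < \dim D) e`_i by rewrite addrK.
  apply: memvB; first by apply: memv_span; rewrite mem_head.
  apply: rpred_sum => i _; apply: (subvP eS); apply: vbasis_mem.
  by rewrite mem_nth // size_tuple.
change (\sum_(i < (n.+1)./2) ys`_i = j).
rewrite -(big_mkord xpredT (fun i => ys`_i)) hk hdC big_nat_recl //= big_mkord.
by rewrite /a -addrA vaa addr0.
Qed.
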